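(* Let $\tau,\delta\in W$ be defined recursively by $\tau=(1,\tau)\sigma$ and $\delta=(\delta,\delta)\sigma$. Then $H=\langle\tau,\delta\rangle$ is infinite dihedral, and $N_W(H)=H$.
   Context: $W$ is the isometry group of the binary rooted tree $\{0,1\}^*$. Elements are written $(g_0,g_1)\pi$ with $\pi\in\mathrm{Sym}(\{0,1\})$, meaning $(xw)^{(g_0,g_1)\pi}=x^\pi w^{g_x}$; $\sigma$ is the nontrivial permutation of $\{0,1\}$ acting rigidly at the root. *)

(* Defs.v *)
From mathcomp Require Import all_boot all_algebra.
Set Implicit Arguments. Unset Strict Implicit. Unset Printing Implicit Defensive.
Import GRing.Theory Num.Theory.

(* Vertices of the binary rooted tree {0,1}^*: words over bool
   (false = 0, true = 1); the root is the empty word. *)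
Notation word := (seq bool).

(* Elements of W act on the right: x^g is written (g x) here, and the
   product g h (first g, then h) is the function (fun x => h (g x)). *)
Definition wmul (g h : word -> word) : word -> word := fun x => h (g x).

(* W = isometry group of the rooted binary tree = automorphisms of the
   rooted tree: bijections of the vertex set preserving the level and the
   ancestor (prefix) relation. *)
Definition inW (g : word -> word) : Prop :=
  bijective g /\ (forall w, size (g w) = size w) /\
  (forall u v, prefix u v -> prefix (g u) (g v)).

(* tau = (1, tau) sigma :  0w -> 1w,  1w -> 0 w^tau *)
Fixpoint tau (w : word) : word :=
  match w with
  | [::] => [::]
  | false :: w' => true :: w'
  | true :: w' => false :: tau w'
  end.

(* delta = (delta, delta) sigma :  xw -> x^sigma w^delta *)
Fixpoint delta (w : word) : word :=
  match w with
  | [::] => [::]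
  | x :: w' => negb x :: delta w'
  end.

Inductive inH : (word -> word) -> Prop :=
  | inH_id : inH id
  | inH_tau : inH tau
  | inH_delta : inH delta
  | inH_mul : forall g h, inH g -> inH h -> inH (wmul g h)
  | inH_inv : forall g h, inH g -> cancel g h -> cancel h g -> inH h.

Definition inNWH (g : word -> word) : Prop :=
  inW g /\ exists ginv : word -> word,
    [/\ cancel g ginv, cancel ginv g &
        forall h, inH h <-> inH (wmul (wmul ginv h) g)].

(* The infinite dihedral group D_infty = Z x| Z/2, elements (n, a)
   standing for r^n s^a, with (m,a)(n,b) = (m + (-1)^a n, a xor b). *)
Definition Dinf := (int * bool)%type.
Definition Dinf_mul (x y : Dinf) : Dinf :=
  ((x.1 + (if x.2 then - y.1 else y.1))%R, addb x.2 y.2).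

Definition H_infinite_dihedral : Prop :=
  exists phi : Dinf -> (word -> word),
    [/\ injective phi,
        (forall x y, phi (Dinf_mul x y) = wmul (phi x) (phi y)),
        (forall x, inH (phi x)) &
        (forall h, inH h -> exists x, phi x = h)].

(* Main.v *)
Require Import Defs.
From mathcomp Require Import all_boot all_algebra.
From mathcomp Require Import ring lra zify.
From Stdlib Require Import FunctionalExtensionality.
Set Implicit Arguments. Unset Strict Implicit. Unset Printing Implicit Defensive.
Import GRing.Theory Num.Theory.
Local Open Scope ring_scope.

Fixpoint valn (w : word) : nat := if w is b :: w' then (b + 2 * valn w')%N else 0%N.
Definition vz (w : word) : int := (valn w)%:Z.
Definition pw (k : nat) : int := (2 ^ k)%N%:Z.

Lemma vz_cons b w : vz (b :: w) = (b : nat)%:Z + 2 * vz w.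
Proof. by rewrite /vz /= PoszD PoszM. Qed.
Lemma vz_nil : vz [::] = 0. Proof. by []. Qed.
Lemma pwS k : pw k.+1 = 2 * pw k.
Proof. by rewrite /pw expnS PoszM. Qed.
Lemma pw0 : pw 0 = 1. Proof. by []. Qed.
Lemma pw_neq0 k : pw k != 0.
Proof. by rewrite /pw eqz_nat expn_eq0. Qed.

Lemma dvd_half k z : (pw k.+1 %| 2 * z)%Z = (pw k %| z)%Z.
Proof. by rewrite pwS dvdz_mul2l. Qed.

Lemma dvd2_pwS k z : (pw k.+1 %| z)%Z -> (2 %| z)%Z.
Proof. rewrite pwS => H; apply: dvdz_trans H; exact: dvdz_mulr. Qed.

Lemma vzK u v : size u = size v -> (pw (size u) %| vz u - vz v)%Z -> u = v.
Proof.
elim: u v => [|b u IH] [|c v] //= [Hs] H.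
rewrite !vz_cons in H.
have H2 := dvd2_pwS H.
have Ebc : b = c by case: b c H2 {H} => [] [] //= H2; lia.
subst c; congr (_ :: _); apply: IH => //.
rewrite -dvd_half.
by have -> : 2 * (vz u - vz v) = b%:Z + 2 * vz u - (b%:Z + 2 * vz v) by ring.
Qed.

Lemma dvd_all0 z : (forall k, (pw k %| z)%Z) -> z = 0.
Proof.
move=> H; have := H `|z|%N; rewrite dvdzE /pw /=.
case: (`|z|%N =P 0%N) => [/eqP|Hn Hd]; first by rewrite absz_eq0 => /eqP.
have := dvdn_leq _ Hd; rewrite lt0n => /(_ (introN eqP Hn)).
by rewrite leqNgt ltn_expl.
Qed.
Fixpoint taui (w : word) : word :=
  match w with
  | [::] => [::]
  | true :: w' => false :: w'
  | false :: w' => true :: taui w'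
  end.

Definition aff (g : word -> word) (a b : int) :=
  (forall w, size (g w) = size w) /\
  (forall w, (pw (size w) %| vz (g w) - (a * vz w + b))%Z).

Lemma aff_tau : aff tau 1 1.
Proof.
split; first by elim=> [|[] w IH] //=; rewrite IH.
elim=> [|[] w IH]; first by rewrite pw0 dvd1z.
- rewrite /= !vz_cons /=.
  have -> : 0%:Z + 2 * vz (tau w) - (1 * (1%:Z + 2 * vz w) + 1)
     = 2 * (vz (tau w) - (1 * vz w + 1)) by ring.
  by rewrite dvd_half.
- rewrite /= !vz_cons /=.
  have -> : 1%:Z + 2 * vz w - (1 * (0%:Z + 2 * vz w) + 1) = 2 * 0 by ring.
  by rewrite dvd_half dvdz0.
Qed.

Lemma aff_taui : aff taui 1 (-1).
Proof.
split; first by elim=> [|[] w IH] //=; rewrite IH.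
elim=> [|[] w IH]; first by rewrite pw0 dvd1z.
- rewrite /= !vz_cons /=.
  have -> : 0%:Z + 2 * vz w - (1 * (1%:Z + 2 * vz w) + -1) = 2 * 0 by ring.
  by rewrite dvd_half dvdz0.
- rewrite /= !vz_cons /=.
  have -> : 1%:Z + 2 * vz (taui w) - (1 * (0%:Z + 2 * vz w) + -1)
     = 2 * (vz (taui w) - (1 * vz w + -1)) by ring.
  by rewrite dvd_half.
Qed.

Lemma aff_delta : aff delta (-1) (-1).
Proof.
split; first by elim=> [|b w IH] //=; rewrite IH.
elim=> [|[] w IH]; first by rewrite pw0 dvd1z.
- rewrite /= !vz_cons /=.
  have -> : 0%:Z + 2 * vz (delta w) - (-1 * (1%:Z + 2 * vz w) + -1)
     = 2 * (vz (delta w) - (-1 * vz w + -1)) by ring.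
  by rewrite dvd_half.
- rewrite /= !vz_cons /=.
  have -> : 1%:Z + 2 * vz (delta w) - (-1 * (0%:Z + 2 * vz w) + -1)
     = 2 * (vz (delta w) - (-1 * vz w + -1)) by ring.
  by rewrite dvd_half.
Qed.

Lemma aff_id : aff id 1 0.
Proof. split=> // w; have -> : vz (id w) - (1 * vz w + 0) = 0 by rewrite /=; ring.
exact: dvdz0. Qed.

Lemma aff_comp g h a b c d : aff g a b -> aff h c d ->
  aff (fun w => h (g w)) (c * a) (c * b + d).
Proof.
move=> [Sg Dg] [Sh Dh]; split=> [w|w]; first by rewrite Sh Sg.
have -> : vz (h (g w)) - (c * a * vz w + (c * b + d)) =
   (vz (h (g w)) - (c * vz (g w) + d)) + c * (vz (g w) - (a * vz w + b)) by ring.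
rewrite rpredD //; last exact: dvdz_mull.
by rewrite -(Sg w).
Qed.

Lemma aff_iter f d k : aff f 1 d -> aff (iter k f) 1 (k%:Z * d).
Proof.
move=> Hf; elim: k => [|k IH].
  have -> : (0%N%:Z * d) = 0 by ring. exact: aff_id.
have := aff_comp IH Hf.
have -> : (1 * 1 : int) = 1 by ring.
have -> : 1 * (k%:Z * d) + d = k.+1%:Z * d by rewrite -addn1 PoszD; ring.
by [].
Qed.

Lemma aff_eqf g h a b : aff g a b -> aff h a b -> g = h.
Proof.
move=> [Sg Dg] [Sh Dh]; apply: functional_extensionality => w.
apply: vzK; first by rewrite Sg Sh.
rewrite Sg.
have -> : vz (g w) - vz (h w) = (vz (g w) - (a * vz w + b)) - (vz (h w) - (a * vz w + b)) by ring.
by rewrite rpredB.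
Qed.

Definition tpow (n : int) : word -> word :=
  match n with Posz k => iter k tau | Negz k => iter k.+1 taui end.

Lemma aff_tpow n : aff (tpow n) 1 n.
Proof.
case: n => k /=.
  have := aff_iter k aff_tau. by rewrite mulr1.
have := aff_iter k.+1 aff_taui. by rewrite NegzE mulrN1.
Qed.

Lemma aff_eqp g a b a' b' : aff g a b -> a = a' -> b = b' -> aff g a' b'.
Proof. by move=> H <- <-. Qed.

Definition sg (a : bool) : int := if a then -1 else 1.
Definition off (x : Dinf) : int := if x.2 then -1 - x.1 else x.1.
Definition phi (x : Dinf) : word -> word :=
  if x.2 then wmul (tpow x.1) delta else tpow x.1.

Lemma aff_phi x : aff (phi x) (sg x.2) (off x).
Proof.
case: x => n [] /=; rewrite /phi /=; last exact: aff_tpow.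
apply: aff_eqp (aff_comp (aff_tpow n) aff_delta) _ _; rewrite /sg /off /=; ring.
Qed.

Lemma phi_mul x y : phi (Dinf_mul x y) = wmul (phi x) (phi y).
Proof.
apply: (aff_eqf (aff_phi _)).
apply: aff_eqp (aff_comp (aff_phi x) (aff_phi y)) _ _;
case: x y => [m [] ] [n []]; rewrite /off /sg /Dinf_mul /=; ring.
Qed.

Lemma vz_nseq0 k : vz (nseq k false) = 0.
Proof. by elim: k => // k IH; rewrite /= vz_cons IH /=; ring. Qed.

Lemma aff_diff g a b a' b' : aff g a b -> aff g a' b' ->
  forall w, (pw (size w) %| (a - a') * vz w + (b - b'))%Z.
Proof.
move=> [_ D1] [_ D2] w.
have -> : (a - a') * vz w + (b - b') =
  (vz (g w) - (a' * vz w + b')) - (vz (g w) - (a * vz w + b)) by ring.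
by rewrite rpredB.
Qed.

Lemma aff_uniq g s s' b b' : aff g (sg s) b -> aff g (sg s') b' -> s = s' /\ b = b'.
Proof.
move=> H1 H2; have D := aff_diff H1 H2.
have Eb : b = b'.
  apply/eqP; rewrite -subr_eq0; apply/eqP; apply: dvd_all0 => k.
  by have := D (nseq k false); rewrite size_nseq vz_nseq0 mulr0 add0r.
split=> //; subst b'.
have := D [:: true; false]; rewrite subrr addr0 /pw /=.
have -> : vz [:: true; false] = 1 by [].
by case: s {H1 D} s' {H2} => [] [] //=; lia.
Qed.

Lemma phi_inj : injective phi.
Proof.
move=> x y E; have H1 := aff_phi x; rewrite E in H1.
have [Es Eb] := aff_uniq H1 (aff_phi y).
case: x y {H1 E} Es Eb => [m a] [n b] /= -> ; rewrite /off /=.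
case: b => H; last by rewrite H.
by congr (_, _); lia.
Qed.

Definition Dinv (x : Dinf) : Dinf := if x.2 then x else (- x.1, false).

Lemma Dinv_l x : Dinf_mul (Dinv x) x = (0, false).
Proof. case: x => n [] /=; rewrite /Dinf_mul /=; congr (_, _); ring. Qed.
Lemma Dinv_r x : Dinf_mul x (Dinv x) = (0, false).
Proof. case: x => n [] /=; rewrite /Dinf_mul /=; congr (_, _); ring. Qed.

Lemma phi0 : phi (0, false) = id.
Proof. by []. Qed.

Lemma phiK x : cancel (phi x) (phi (Dinv x)).
Proof.
move=> w; have := congr1 (fun f => f w) (phi_mul x (Dinv x)).
by rewrite Dinv_r phi0 /wmul /= => <-.
Qed.
Lemma phiKV x : cancel (phi (Dinv x)) (phi x).
Proof.
move=> w; have := congr1 (fun f => f w) (phi_mul (Dinv x) x).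
by rewrite Dinv_l phi0 /wmul /= => <-.
Qed.

Lemma tau_tauiK : cancel tau taui.
Proof. by elim=> [|[] w IH] //=; rewrite IH. Qed.
Lemma taui_tauK : cancel taui tau.
Proof. by elim=> [|[] w IH] //=; rewrite IH. Qed.

Lemma inH_iter f k : inH f -> inH (iter k f).
Proof.
move=> Hf; elim: k => [|k IH]; first exact: inH_id.
by have := inH_mul IH Hf.
Qed.

Lemma inH_phi x : inH (phi x).
Proof.
have Ht : forall n, inH (tpow n).
  case=> k /=; first exact: inH_iter inH_tau.
  apply: inH_iter; exact: (inH_inv inH_tau tau_tauiK taui_tauK).
case: x => n [] /=; rewrite /phi /=; last exact: Ht.
exact: inH_mul (Ht n) inH_delta.
Qed.

Lemma inH_NF h : inH h -> exists x, h = phi x.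
Proof.
elim=> [| | |g1 g2 _ [x ->] _ [y ->]|g1 g2 _ [x ->] K1 K2].
- by exists (0, false).
- by exists (1%:Z, false).
- by exists (0, true).
- by exists (Dinf_mul x y); rewrite phi_mul.
- exists (Dinv x); apply: functional_extensionality => w.
  by rewrite -{1}(phiKV x w) K1.
Qed.

Lemma dinf : H_infinite_dihedral.
Proof.
exists phi; split.
- exact: phi_inj.
- exact: phi_mul.
- exact: inH_phi.
- by move=> h /inH_NF [x ->]; exists x.
Qed.

Lemma pwD m n : pw (m + n) = pw m * pw n.
Proof. by rewrite /pw expnD PoszM. Qed.

Lemma vz_cat x y : vz (x ++ y) = vz x + pw (size x) * vz y.
Proof.
elim: x => [|b x IH] /=; first by rewrite pw0 vz_nil; ring.
by rewrite !vz_cons IH pwS; ring.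
Qed.

Lemma aff_prefix f a b : aff f a b -> forall u v, prefix u v -> prefix (f u) (f v).
Proof.
move=> [Sf Df] u v /prefixP [s ->].
rewrite prefixE Sf; apply/eqP.
set z := f (u ++ s).
have Sz : size z = (size u + size s)%N by rewrite /z Sf size_cat.
have Hk : (size u <= size z)%N by rewrite Sz leq_addr.
apply: vzK; first by rewrite size_takel // Sf.
rewrite size_takel //.
have Ez : vz z = vz (take (size u) z) + pw (size u) * vz (drop (size u) z).
  by rewrite -{1}(cat_take_drop (size u) z) vz_cat size_takel.
have Ht := Df (u ++ s); have Hu := Df u.
rewrite size_cat pwD -/z vz_cat in Ht.
have -> : vz (take (size u) z) - vz (f u) =
  (vz z - (a * (vz u + pw (size u) * vz s) + b)) - (vz (f u) - (a * vz u + b))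
  + pw (size u) * (a * vz s - vz (drop (size u) z)).
  rewrite Ez; move: (vz (take _ _)) (vz (drop _ _)) (pw (size u)) (vz (f u)) (vz u) (vz s) => X1 X2 X3 X4 X5 X6; ring.
rewrite rpredD //; last exact: dvdz_mulr (dvdzz _).
rewrite rpredB //.
by apply: dvdz_trans Ht; exact: dvdz_mulr (dvdzz _).
Qed.

Lemma inW_phi x : inW (phi x).
Proof.
split; first exact: (Bijective (phiK x) (phiKV x)).
split; first exact: (aff_phi x).1.
exact: aff_prefix (aff_phi x).
Qed.

Lemma word_iter w : iter (valn w) tau (nseq (size w) false) = w.
Proof.
have [S D] := aff_iter (valn w) aff_tau.
apply: vzK; first by rewrite S size_nseq.
have := D (nseq (size w) false); rewrite S size_nseq vz_nseq0.
by rewrite /vz; have -> : (1 * 0 + (valn w)%:Z * 1) = (valn w)%:Z by ring.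
Qed.

Lemma conj_form f n : (forall w, size (f w) = size w) ->
  (forall w, f (tau w) = tpow n (f w)) ->
  forall w, (pw (size w) %| vz (f w) - (n * vz w + vz (f (nseq (size w) false))))%Z.
Proof.
move=> Sf Hf w.
set k := size w; set c := vz (f (nseq k false)).
have Si : forall j, size (iter j tau (nseq k false)) = k.
  by move=> j; rewrite (aff_iter j aff_tau).1 size_nseq.
suff G : forall j, (pw k %| vz (f (iter j tau (nseq k false))) - (n * j%:Z + c))%Z.
  by have := G (valn w); rewrite /k word_iter.
elim=> [|j IH] /=.
  by rewrite /c; have -> : vz (f (nseq k false)) - (n * 0%N%:Z + vz (f (nseq k false))) = 0 by ring.
rewrite Hf.
have := (aff_tpow n).2 (f (iter j tau (nseq k false))).
rewrite Sf Si => H.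
have -> : vz (tpow n (f (iter j tau (nseq k false)))) - (n * j.+1%:Z + c) =
  (vz (tpow n (f (iter j tau (nseq k false)))) - (1 * vz (f (iter j tau (nseq k false))) + n))
  + (vz (f (iter j tau (nseq k false))) - (n * j%:Z + c)) by rewrite -addn1 PoszD; ring.
by rewrite rpredD.
Qed.

Lemma prefix_nseq k : prefix (nseq k false) (nseq k.+1 false).
Proof. by elim: k => [|k IH] //=; rewrite prefix_cons eqxx. Qed.

Lemma unit_int (n m : int) : n * m = 1 -> n = 1 \/ n = -1.
Proof.
move=> H. have : (`|n| * `|m| = 1)%N by rewrite -abszM H.
move/eqP; rewrite muln_eq1 => /andP [/eqP H1 _]. lia.
Qed.

Lemma dvd_eq (d x y : int) : (d %| x)%Z -> x = y -> (d %| y)%Z.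
Proof. by move=> H <-. Qed.

Lemma conj_translation (g ginv : word -> word) :
  cancel g ginv -> cancel ginv g ->
  inH (wmul (wmul ginv tau) g) -> exists n, forall w, g (tau w) = tpow n (g w).
Proof.
move=> K1 K2 /inH_NF [[n a] Eu].
have Eu' : forall w, g (tau (ginv w)) = phi (n, a) w.
  by move=> w; rewrite -Eu.
case: a {Eu} Eu' => Eu'; last first.
  by exists n => w; have := Eu' (g w); rewrite K1.
exfalso.
have E := phi_mul (n, true) (n, true).
have E2 : Dinf_mul (n, true) (n, true) = (0, false) by rewrite /Dinf_mul /= subrr.
rewrite E2 phi0 in E.
have Hinv : forall w, phi (n, true) (phi (n, true) w) = w.
  move=> w; change (wmul (phi (n, true)) (phi (n, true)) w = w).
  by rewrite -E.
set z := [:: false; false].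
have E1 : phi (n, true) (g z) = g (tau z) by rewrite -Eu' K1.
have E3 : phi (n, true) (g (tau z)) = g (tau (tau z)) by rewrite -Eu' K1.
have := Hinv (g z); rewrite E1 E3 => /(congr1 ginv); rewrite !K1.
by [].
Qed.

Lemma normalizer g : inNWH g -> inH g.
Proof.
move=> [[_ [Sg Pg]] [ginv [K1 K2 Hc]]].
have Sgi : forall w, size (ginv w) = size w by move=> w; rewrite -{2}(K2 w) Sg.
have Stau : forall w, size (tau w) = size w := aff_tau.1.
have Sdelta : forall w, size (delta w) = size w := aff_delta.1.
have [n Hn] : exists n, forall w, g (tau w) = tpow n (g w).
  apply: (conj_translation K1 K2); exact: (proj1 (Hc tau) inH_tau).
have [m Hm] : exists m, forall w, ginv (tau w) = tpow m (ginv w).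
  apply: (conj_translation K2 K1).
  apply/(Hc (wmul (wmul g tau) ginv)).
  have -> : wmul (wmul ginv (wmul (wmul g tau) ginv)) g = tau.
    by apply: functional_extensionality => w; rewrite /wmul !K2.
  exact: inH_tau.
have Fg := conj_form Sg Hn.
have Fi := conj_form Sgi Hm.
have Hnm : n * m = 1.
  apply/eqP; rewrite -subr_eq0; apply/eqP; apply: dvd_all0 => k.
  have A := Fg (ginv (tau (nseq k false))).
  rewrite K2 Sgi Stau size_nseq in A.
  have B := Fi (tau (nseq k false)).
  rewrite Stau size_nseq in B.
  have C := aff_tau.2 (nseq k false).
  rewrite size_nseq vz_nseq0 in C.
  have D := Fg (ginv (nseq k false)).
  rewrite K2 Sgi size_nseq vz_nseq0 in D.
  have E := Fi (nseq k false).
  rewrite size_nseq vz_nseq0 in E.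
  apply: (dvd_eq (rpredD (rpredB (rpredD (rpredB (dvdz_mull (1 - n * m) C)
     (dvdz_mull n B)) (dvdz_mull n E)) A) D)).
  ring.
have Hn1 := unit_int Hnm.
have [[p a] Ed] := inH_NF (proj1 (Hc delta) inH_delta).
have Hgd : forall w, g (delta w) = phi (p, a) (g w).
  by move=> w; rewrite -Ed /wmul K1.
pose c k := vz (g (nseq k false)).
have Ap : aff (phi (p, a)) (sg a) (off (p, a)) := aff_phi (p, a).
have Key : forall w, (pw (size w) %| n * (-1 - vz w) + c (size w)
      - sg a * (n * vz w + c (size w)) - off (p, a))%Z.
  move=> w.
  have F1 := Fg (delta w). rewrite Sdelta in F1.
  have F2 := aff_delta.2 w.
  have F3 := Ap.2 (g w). rewrite Sg -Hgd in F3.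
  have F4 := Fg w.
  apply: (dvd_eq (rpredD (rpredB (rpredB F3 F1) (dvdz_mull n F2)) (dvdz_mull (sg a) F4))).
  rewrite /c; ring.
case: a Ap Hgd Ed Key => Ap Hgd Ed Key; last first.
  exfalso.
  have K0 := Key [:: false; false]; have K3 := Key [:: true; false].
  have V0 : vz [:: false; false] = 0 by [].
  have V1 : vz [:: true; false] = 1 by [].
  have P2 : pw (size [:: true; false]) = 4 by [].
  rewrite V0 P2 /sg /off /= in K0; rewrite V1 P2 /sg /off /= in K3.
  move: K0 K3; set cc := c _; lia.
set be := off (p, true).
have Hk : forall k, (pw k %| 2 * c k - (n + be))%Z.
  move=> k; have := Key (nseq k false); rewrite size_nseq vz_nseq0 => H.
  apply: (dvd_eq H); rewrite /sg /=; ring.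
have [r Hr] : exists r, n + be = 2 * r.
  have H1 := Hk 1%N; rewrite /pw /= in H1.
  have H2 : (2 %| n + be)%Z.
    apply: (dvd_eq (rpredB (dvdz_mulr (c 1%N) (dvdzz 2)) H1)); ring.
  case/dvdzP: H2 => q Hq; exists q; rewrite Hq; ring.
have HkS : forall k, (pw k %| c k.+1 - r)%Z.
  move=> k; rewrite -dvd_half; apply: (dvd_eq (Hk k.+1)); rewrite Hr; ring.
have Hpre : forall k, (pw k %| c k.+1 - c k)%Z.
  move=> k; have := Pg _ _ (prefix_nseq k); case/prefixP => s Es.
  rewrite /c Es vz_cat Sg size_nseq.
  apply: (dvd_eq (dvdz_mulr (vz s) (dvdzz (pw k)))); ring.
have Hck : forall k, (pw k %| c k - r)%Z.
  move=> k; apply: (dvd_eq (rpredB (HkS k) (Hpre k))); ring.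
have Ag : aff g n r.
  split=> // w; apply: (dvd_eq (rpredD (Fg w) (Hck (size w)))); rewrite /c; ring.
case: Hn1 => En; rewrite En in Ag.
  have -> : g = phi (r, false).
    apply: (aff_eqf Ag); exact: (aff_phi (r, false)).
  exact: inH_phi.
have -> : g = phi (-1 - r, true).
  apply: (aff_eqf Ag); apply: aff_eqp (aff_phi (-1 - r, true)) _ _ => //.
  rewrite /off /=; ring.
exact: inH_phi.
Qed.

Lemma H_normal g : inH g -> inNWH g.
Proof.
move=> /inH_NF [x ->]; split; first exact: inW_phi.
exists (phi (Dinv x)); split; [exact: phiK | exact: phiKV |] => h; split => Hh.
  exact: inH_mul (inH_mul (inH_phi _) Hh) (inH_phi _).
have -> : h = wmul (wmul (phi x) (wmul (wmul (phi (Dinv x)) h) (phi x))) (phi (Dinv x)).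
  by apply: functional_extensionality => w; rewrite /wmul !phiK.
exact: inH_mul (inH_mul (inH_phi _) Hh) (inH_phi _).
Qed.

Theorem theorem4p12 :
  H_infinite_dihedral /\ (forall g : word -> word, inNWH g <-> inH g).
Proof.
split; first exact: dinf.
move=> g; split; [exact: normalizer | exact: H_normal].
Qed.
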